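(* Let $\Gamma<H$ be a cocompact discrete subgroup of the three-dimensional Heisenberg group $H$ with the metric and magnetic form of the context. For each $E>|B|$, the set $\mathrm{Per}^E(\Gamma\backslash H)$ is dense in $S^E(\Gamma\backslash H)$.
   Context: $H$ is the simply connected Lie group whose Lie algebra has basis $X,Y,Z$ with only nonzero bracket $[X,Y]=Z$. Fix $A>0$; $g$ is the left-invariant Riemannian metric with $\{X/\sqrt A,Y/\sqrt A,Z\}$ orthonormal. With $\{\alpha,\beta,\zeta\}$ the dual basis and $B\in\mathbb R$, the magnetic form is $\Omega=d(B\zeta)=-B\alpha\wedge\beta$. A magnetic geodesic is a curve $\sigma$ with $\nabla_{\sigma'}\sigma'=F\sigma'$, where $\nabla$ is the Levi-Civita connection and $F$ is defined by $g(Fu,v)=\Omega(u,v)$; magnetic geodesics have constant speed (energy). $\Gamma\backslash H$ carries the induced metric and magnetic form. For a Riemannian manifold $M$ with magnetic form, $S^EM=\{V\in TM:|V|=E\}$, $\sigma_V$ is the magnetic geodesic with $\sigma_V'(0)=V$, and $\mathrm{Per}^E(M)=\{V\in S^EM:\sigma_V\text{ is periodic}\}$. *)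

(* Defs.v *)
From Stdlib Require Import Reals List.
From Coquelicot Require Import Coquelicot.
Open Scope R_scope.

(* Triples of reals: used both for points of H (coordinates (x,y,z)) and for
   tangent vectors expressed in the left-invariant frame (X,Y,Z). *)
Definition R3 : Type := (R * R * R)%type.
Definition c1 (p : R3) : R := fst (fst p).
Definition c2 (p : R3) : R := snd (fst p).
Definition c3 (p : R3) : R := snd p.

(* Its left-invariant vector fields at p = (x,y,z) are
     X = d/dx,  Y = d/dy + x d/dz,  Z = d/dz,
   whose only nonzero bracket is [X,Y] = Z. *)
Definition Hmul (p q : R3) : R3 :=
  (c1 p + c1 q, c2 p + c2 q, c3 p + c3 q + c1 p * c2 q).
Definition Hone : R3 := (0, 0, 0).
Definition Hinv (p : R3) : R3 := (- c1 p, - c2 p, - c3 p + c1 p * c2 p).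

Definition lie (u v : R3) : R3 := (0, 0, c1 u * c2 v - c2 u * c1 v).
Definition gmet (A : R) (u v : R3) : R :=
  A * (c1 u * c1 v + c2 u * c2 v) + c3 u * c3 v.
Definition vnorm (A : R) (u : R3) : R := sqrt (gmet A u u).
(* Magnetic form Omega = d(B zeta) = - B alpha /\ beta. *)
Definition Omega (B : R) (u v : R3) : R :=
  - B * (c1 u * c2 v - c2 u * c1 v).
(* Koszul formula for left-invariant fields: g(nabla_U V, W). *)
Definition koszul (A : R) (U V W : R3) : R :=
  / 2 * (gmet A (lie U V) W - gmet A (lie V W) U + gmet A (lie W U) V).

(* Max-norm distance on R^3 (induces the standard topology). *)
Definition dist3 (p q : R3) : R :=
  Rmax (Rabs (c1 p - c1 q)) (Rmax (Rabs (c2 p - c2 q)) (Rabs (c3 p - c3 q))).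

(* Velocity of a curve s in the left-invariant frame:
   s'(t) = a X + b Y + c Z with a = x', b = y', c = z' - x y'. *)
Definition vel (s : R -> R3) (t : R) : R3 :=
  (Derive (fun u => c1 (s u)) t,
   Derive (fun u => c2 (s u)) t,
   Derive (fun u => c3 (s u)) t - c1 (s t) * Derive (fun u => c2 (s u)) t).

(* Magnetic geodesic: nabla_{s'} s' = F s', where g(Fu,v) = Omega(u,v).
   Tested against every W (g is nondegenerate).  With s' = sum w_i E_i,
   nabla_{s'} s' = sum w_i' E_i + sum w_i w_j nabla_{E_i} E_j, so
   g(nabla_{s'} s', W) = g(w', W) + koszul(w, w, W). *)
Definition magnetic_geodesic (A B : R) (s : R -> R3) : Prop :=
  (forall t, ex_derive (fun u => c1 (s u)) t /\ ex_derive (fun u => c2 (s u)) t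
             /\ ex_derive (fun u => c3 (s u)) t) /\
  (forall t, ex_derive (fun u => c1 (vel s u)) t /\ ex_derive (fun u => c2 (vel s u)) t
             /\ ex_derive (fun u => c3 (vel s u)) t) /\
  (forall t (W : R3),
     gmet A (Derive (fun u => c1 (vel s u)) t,
             Derive (fun u => c2 (vel s u)) t,
             Derive (fun u => c3 (vel s u)) t) W
     + koszul A (vel s t) (vel s t) W
     = Omega B (vel s t) W).

(* Subgroups of H, discreteness, and cocompactness (compactness of the
   quotient Gamma\H: open sets of Gamma\H correspond to Gamma-invariant open
   subsets of H). *)
Definition is_subgroup (G : R3 -> Prop) : Prop :=
  G Hone /\ (forall a b, G a -> G b -> G (Hmul a b)) /\ (forall a, G a -> G (Hinv a)).

Definition is_discrete (G : R3 -> Prop) : Prop :=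
  forall a, G a -> exists eps, 0 < eps /\ forall b, G b -> dist3 a b < eps -> b = a.

Definition is_open3 (U : R3 -> Prop) : Prop :=
  forall p, U p -> exists eps, 0 < eps /\ forall q, dist3 p q < eps -> U q.

Definition G_invariant (G : R3 -> Prop) (U : R3 -> Prop) : Prop :=
  forall g p, G g -> U p -> U (Hmul g p).

Definition cocompact (G : R3 -> Prop) : Prop :=
  forall (I : Type) (U : I -> R3 -> Prop),
    (forall i, is_open3 (U i) /\ G_invariant G (U i)) ->
    (forall p, exists i, U i p) ->
    exists l : list I, forall p, exists i, List.In i l /\ U i p.

Definition cocompact_lattice (G : R3 -> Prop) : Prop :=
  is_subgroup G /\ is_discrete G /\ cocompact G.

Definition periodic_mod (G : R3 -> Prop) (s : R -> R3) : Prop :=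
  exists T, 0 < T /\ forall t, exists g, G g /\ s (t + T) = Hmul g (s t).

(* The (lift of the) vector w at p (frame components) lies in Per(Gamma\H):
   the magnetic geodesic with initial velocity (p,w) exists and is periodic
   in Gamma\H (every such solution; they are unique by ODE theory). *)
Definition in_Per (A B : R) (G : R3 -> Prop) (p w : R3) : Prop :=
  (exists s, magnetic_geodesic A B s /\ s 0 = p /\ vel s 0 = w) /\
  (forall s, magnetic_geodesic A B s -> s 0 = p -> vel s 0 = w -> periodic_mod G s).

(* Main.v *)
From Stdlib Require Import Reals Lra Lia ZArith List Classical FunctionalExtensionality.
From Coquelicot Require Import Coquelicot.
Require Import Defs.
Open Scope R_scope.

Lemma const0 (f : R -> R) : (forall t, is_derive f t 0) -> forall t, f t = f 0.
Proof.
  intros H t.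
  destruct (Rtotal_order t 0) as [Hl|[He|Hg]].
  - apply eq_is_derive; [intros; apply H | lra].
  - now subst.
  - symmetry; apply eq_is_derive; [intros; apply H | lra].
Qed.

Lemma R3_eta (p : R3) : p = (c1 p, c2 p, c3 p).
Proof. destruct p as [[x y] z]; reflexivity. Qed.

Lemma R3_eq (p q : R3) : c1 p = c1 q -> c2 p = c2 q -> c3 p = c3 q -> p = q.
Proof. destruct p as [[x y] z], q as [[x' y'] z']; unfold c1,c2,c3; simpl; intros; subst; reflexivity. Qed.

Lemma cosZ (x : R) (k : nat) : cos (x - 2 * INR k * PI) = cos x.
Proof. rewrite <- (cos_period (x - 2 * INR k * PI) k). f_equal; ring. Qed.
Lemma sinZ (x : R) (k : nat) : sin (x - 2 * INR k * PI) = sin x.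
Proof. rewrite <- (sin_period (x - 2 * INR k * PI) k). f_equal; ring. Qed.

Lemma eqn_alg A B d1 d2 d3 (v : R3) :
  (forall W, gmet A (d1,d2,d3) W + koszul A v v W = Omega B v W) ->
  d3 = 0 /\ A * d1 = (B - c3 v) * c2 v /\ A * d2 = (c3 v - B) * c1 v.
Proof.
  intro H. destruct v as [[v1 v2] v3].
  pose proof (H (0,0,1)) as E3. pose proof (H (1,0,0)) as E1. pose proof (H (0,1,0)) as E2.
  unfold gmet, koszul, lie, Omega, c1, c2, c3 in *; simpl in *.
  unfold gmet, c1, c2, c3 in *; simpl in *. ring_simplify in E1; ring_simplify in E2; ring_simplify in E3. repeat split; lra.
Qed.

Section Sol.
Variables A B x0 y0 z0 a0 b0 c : R.
Hypothesis HA : 0 < A.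
Hypothesis Hc : c <> B.

Definition om := (c - B) / A.
Lemma om_nz : om <> 0.
Proof. unfold om. intro H. apply Rmult_integral in H. destruct H as [H|H].
  - apply Hc; lra. - apply Rinv_neq_0_compat in H; [easy| lra]. Qed.

Definition al t := a0 * cos (om * t) - b0 * sin (om * t).
Definition be t := a0 * sin (om * t) + b0 * cos (om * t).
Definition SX t := x0 + (be t - b0) / om.
Definition SY t := y0 - (al t - a0) / om.
Definition SZ t := z0 + c * t + (x0 - b0 / om) * (- (al t - a0) / om)
  + / om * ((a0 ^ 2 + b0 ^ 2) * t / 2 + (b0 ^ 2 - a0 ^ 2) / (4 * om) * sin (2 * om * t)
            - a0 * b0 / (2 * om) * (cos (2 * om * t) - 1)).
Definition Ssol t : R3 := (SX t, SY t, SZ t).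

Lemma d_al t : is_derive al t (- om * be t).
Proof. unfold al, be. auto_derive; auto. ring. Qed.
Lemma d_be t : is_derive be t (om * al t).
Proof. unfold al, be. auto_derive; auto. ring. Qed.
Lemma d_SX t : is_derive SX t (al t).
Proof. unfold SX, al, be. pose proof om_nz. auto_derive; auto. field. auto. Qed.
Lemma d_SY t : is_derive SY t (be t).
Proof. unfold SY, al, be. pose proof om_nz. auto_derive; auto. field. auto. Qed.
Lemma d_SZ t : is_derive SZ t (c + SX t * be t).
Proof. unfold SZ, SX, al, be. pose proof om_nz. auto_derive; auto.
  replace (2 * om * t) with (2 * (om * t)) by ring.
  rewrite cos_2a, sin_2a.
  assert (H1 := sin2_cos2 (om * t)). unfold Rsqr in H1.
  apply Rminus_diag_uniq.
  transitivity ((a0^2+b0^2)/(2*om) * (1 - (sin (om * t) * sin (om * t) + cos (om * t) * cos (om * t)))).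
  field. auto. rewrite H1; ring.
Qed.

Lemma vel_S : vel Ssol = fun t => (al t, be t, c).
Proof.
  apply functional_extensionality; intro t. unfold vel.
  change (fun u => c1 (Ssol u)) with SX. change (fun u => c2 (Ssol u)) with SY.
  change (fun u => c3 (Ssol u)) with SZ.
  rewrite (is_derive_unique _ _ _ (d_SX t)), (is_derive_unique _ _ _ (d_SY t)),
    (is_derive_unique _ _ _ (d_SZ t)).
  unfold c1; simpl. f_equal. ring.
Qed.

Lemma S_geod : magnetic_geodesic A B Ssol.
Proof.
  pose proof om_nz as Hom.
  split; [|split].
  - intro t; repeat split.
    + exists (al t); apply d_SX.
    + exists (be t); apply d_SY.
    + exists (c + SX t * be t); apply d_SZ.
  - rewrite vel_S; intro t; unfold c1, c2, c3; simpl; repeat split.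
    + exists (- om * be t); apply d_al.
    + exists (om * al t); apply d_be.
    + apply ex_derive_const.
  - intros t W. rewrite vel_S; unfold c1, c2, c3; simpl.
    change (fun u => al u) with al. change (fun u => be u) with be.
    rewrite (is_derive_unique _ _ _ (d_al t)), (is_derive_unique _ _ _ (d_be t)), Derive_const.
    destruct W as [[w1 w2] w3].
    unfold gmet, koszul, lie, Omega, c1, c2, c3; simpl.
    unfold gmet, c1, c2, c3; simpl. unfold om. field. lra.
Qed.

Lemma S_init : Ssol 0 = (x0, y0, z0) /\ vel Ssol 0 = (a0, b0, c).
Proof.
  pose proof om_nz as Hom.
  rewrite vel_S. unfold Ssol, SX, SY, SZ, al, be.
  rewrite !Rmult_0_r, sin_0, cos_0. split; apply R3_eq; unfold c1,c2,c3; simpl; field; auto.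
Qed.

Lemma S_unique s : magnetic_geodesic A B s -> s 0 = (x0, y0, z0) -> vel s 0 = (a0, b0, c) ->
  forall t, s t = Ssol t.
Proof.
  intros [Hd [Hdv Heq]] H0 H0v.
  pose proof om_nz as Hom.
  destruct S_init as [HS0 HSv0].
  set (u1 := fun t => c1 (vel s t)). set (u2 := fun t => c2 (vel s t)).
  set (u3 := fun t => c3 (vel s t)).
  assert (HE : forall t, Derive u3 t = 0 /\ A * Derive u1 t = (B - u3 t) * u2 t /\
     A * Derive u2 t = (u3 t - B) * u1 t).
  { intro t. apply eqn_alg. apply Heq. }
  assert (E3 : forall t, Derive u3 t = 0) by (intro t; apply HE).
  assert (Hu3 : forall t, u3 t = c).
  { intro t. rewrite (const0 u3). unfold u3. rewrite H0v. reflexivity.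
    intro t'. rewrite <- (E3 t'). apply Derive_correct. apply Hdv. }
  assert (E1 : forall t, Derive u1 t = - om * u2 t).
  { intro t. destruct (HE t) as [_ [H _]]. rewrite Hu3 in H.
    apply (Rmult_eq_reg_l A); [|lra]. rewrite H. unfold om. field. lra. }
  assert (E2 : forall t, Derive u2 t = om * u1 t).
  { intro t. destruct (HE t) as [_ [_ H]]. rewrite Hu3 in H.
    apply (Rmult_eq_reg_l A); [|lra]. rewrite H. unfold om. field. lra. }
  assert (Hx1 : forall t, ex_derive u1 t) by (intro t; apply Hdv).
  assert (Hx2 : forall t, ex_derive u2 t) by (intro t; apply Hdv).
  assert (Hf : forall t, u1 t * cos (om * t) + u2 t * sin (om * t) = a0).
  { intro t. rewrite (const0 (fun t => u1 t * cos (om * t) + u2 t * sin (om * t))).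
    - unfold u1, u2. rewrite H0v. unfold c1, c2; simpl. rewrite Rmult_0_r, sin_0, cos_0. ring.
    - intro t'. auto_derive. repeat split; auto. rewrite E1, E2. ring. }
  assert (Hg : forall t, - u1 t * sin (om * t) + u2 t * cos (om * t) = b0).
  { intro t. rewrite (const0 (fun t => - u1 t * sin (om * t) + u2 t * cos (om * t))).
    - unfold u1, u2. rewrite H0v. unfold c1, c2; simpl. rewrite Rmult_0_r, sin_0, cos_0. ring.
    - intro t'. auto_derive. repeat split; auto. rewrite E1, E2. ring. }
  assert (Hal : forall t, u1 t = al t).
  { intro t. unfold al. rewrite <- (Hf t), <- (Hg t). pose proof (sin2_cos2 (om * t)) as Hsc.
    unfold Rsqr in Hsc. transitivity (u1 t * (sin (om * t) * sin (om * t) + cos (om * t) * cos (om * t))).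
    rewrite Hsc; ring. ring. }
  assert (Hbe : forall t, u2 t = be t).
  { intro t. unfold be. rewrite <- (Hf t), <- (Hg t). pose proof (sin2_cos2 (om * t)) as Hsc.
    unfold Rsqr in Hsc. transitivity (u2 t * (sin (om * t) * sin (om * t) + cos (om * t) * cos (om * t))).
    rewrite Hsc; ring. ring. }
  assert (HX : forall t, c1 (s t) = SX t).
  { intro t. assert (K := const0 (fun t => c1 (s t) - SX t)).
    apply Rminus_diag_uniq. rewrite K. rewrite H0. 
    change (SX 0) with (c1 (Ssol 0)). rewrite HS0. unfold c1; simpl. ring.
    intro t'. assert (D : is_derive (fun t => c1 (s t) - SX t) t' (u1 t' - al t')).
    { assert (D1 : is_derive (fun t => c1 (s t)) t' (u1 t')).
      { unfold u1, vel, c1 at 1; simpl. apply Derive_correct. apply Hd. }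
      exact (is_derive_minus _ _ _ _ _ D1 (d_SX t')). }
    rewrite Hal, Rminus_eq_0 in D. exact D. }
  assert (HY : forall t, c2 (s t) = SY t).
  { intro t. assert (K := const0 (fun t => c2 (s t) - SY t)).
    apply Rminus_diag_uniq. rewrite K. rewrite H0. 
    change (SY 0) with (c2 (Ssol 0)). rewrite HS0. unfold c2; simpl. ring.
    intro t'. assert (D : is_derive (fun t => c2 (s t) - SY t) t' (u2 t' - be t')).
    { assert (D1 : is_derive (fun t => c2 (s t)) t' (u2 t')).
      { unfold u2, vel, c2 at 1; simpl. apply Derive_correct. apply Hd. }
      exact (is_derive_minus _ _ _ _ _ D1 (d_SY t')). }
    rewrite Hbe, Rminus_eq_0 in D. exact D. }
  assert (HZ : forall t, c3 (s t) = SZ t).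
  { intro t. assert (K := const0 (fun t => c3 (s t) - SZ t)).
    apply Rminus_diag_uniq. rewrite K. rewrite H0. 
    change (SZ 0) with (c3 (Ssol 0)). rewrite HS0. unfold c3; simpl. ring.
    intro t'. assert (D : is_derive (fun t => c3 (s t) - SZ t) t'
       ((u3 t' + c1 (s t') * u2 t') - (c + SX t' * be t'))).
    { assert (D1 : is_derive (fun t => c3 (s t)) t' (u3 t' + c1 (s t') * u2 t')).
      { replace (u3 t' + c1 (s t') * u2 t') with (Derive (fun u => c3 (s u)) t').
        apply Derive_correct. apply Hd.
        unfold u3, u2, vel, c3 at 2, c2 at 3; simpl. ring. }
      exact (is_derive_minus _ _ _ _ _ D1 (d_SZ t')). }
    rewrite Hu3, Hbe, HX, Rminus_eq_0 in D. exact D. }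
  intro t. apply R3_eq; [apply HX|apply HY|apply HZ].
Qed.

Lemma S_shift (T : R) (M : nat) :
  (om * T = 2 * INR M * PI \/ om * T = - (2 * INR M * PI)) ->
  forall t, Ssol (t + T) = Hmul (0, 0, T * (c + (a0^2 + b0^2) / (2 * om))) (Ssol t).
Proof.
  intros HT t. pose proof om_nz as Hom.
  assert (Hc1 : forall x, cos (x + om * T) = cos x /\ sin (x + om * T) = sin x).
  { intro x. destruct HT as [H|H]; rewrite H.
    - split; [apply cos_period|apply sin_period].
    - replace (x + - (2 * INR M * PI)) with (x - 2 * INR M * PI) by ring.
      split; [apply cosZ|apply sinZ]. }
  assert (Hc2 : forall x, cos (x + 2 * (om * T)) = cos x /\ sin (x + 2 * (om * T)) = sin x).
  { intro x. assert (E : 2 * (2 * INR M * PI) = 2 * INR (2 * M) * PI)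
      by (rewrite mult_INR; simpl; ring).
    destruct HT as [H|H]; rewrite H.
    - rewrite E. split; [apply cos_period|apply sin_period].
    - replace (x + 2 * - (2 * INR M * PI)) with (x - 2 * INR (2*M) * PI) by (rewrite <- E; ring).
      split; [apply cosZ|apply sinZ]. }
  assert (E1 : om * (t + T) = om * t + om * T) by ring.
  assert (E2 : 2 * om * (t + T) = 2 * om * t + 2 * (om * T)) by ring.
  unfold Ssol, SX, SY, SZ, al, be, Hmul, c1, c2, c3; simpl.
  rewrite E1, E2. destruct (Hc1 (om * t)) as [-> ->]. destruct (Hc2 (2 * om * t)) as [-> ->].
  apply R3_eq; unfold c1, c2, c3; simpl; field; auto.
Qed.
End Sol.

Lemma central_nat G z : is_subgroup G -> G (0,0,z) -> forall n : nat, G (0,0, INR n * z).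
Proof.
  intros [H1 [Hm Hi]] Hz n. induction n.
  - simpl. replace (0 * z) with 0 by ring. exact H1.
  - replace (0, 0, INR (S n) * z) with (Hmul (0,0,z) (0,0,INR n * z)). apply Hm; auto.
    rewrite S_INR. apply R3_eq; unfold Hmul, c1, c2, c3; simpl; ring.
Qed.

Lemma central_Z G z : is_subgroup G -> G (0,0,z) -> forall k : Z, G (0,0, IZR k * z).
Proof.
  intros HG Hz k. destruct k as [|p|p].
  - simpl. replace (0 * z) with 0 by ring. apply HG.
  - rewrite <- positive_nat_Z, <- INR_IZR_INZ. apply central_nat; auto.
  - replace (0, 0, IZR (Z.neg p) * z) with (Hinv (0,0, INR (Pos.to_nat p) * z)).
    apply HG. apply central_nat; auto.
    apply R3_eq; unfold Hinv, c1, c2, c3; simpl; rewrite ?INR_IZR_INZ, ?positive_nat_Z.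
    ring. ring. rewrite <- Pos2Z.opp_pos, opp_IZR. ring.
Qed.

Lemma comm_elt g h : Hmul (Hmul g h) (Hinv (Hmul h g)) = (0, 0, c1 g * c2 h - c2 g * c1 h).
Proof. apply R3_eq; unfold Hmul, Hinv, c1, c2, c3; simpl; ring. Qed.

Lemma in_sum (l : list nat) i : In i l -> (i <= fold_right Nat.add 0 l)%nat.
Proof. induction l; simpl; [tauto|]. intros [->|H]; [lia|]. specialize (IHl H); lia. Qed.

Lemma dist3_1 p q : Rabs (c1 p - c1 q) <= dist3 p q.
Proof. unfold dist3. apply Rmax_l. Qed.
Lemma dist3_2 p q : Rabs (c2 p - c2 q) <= dist3 p q.
Proof. unfold dist3. eapply Rle_trans; [|apply Rmax_r]. apply Rmax_l. Qed.
Lemma dist3_3 p q : Rabs (c3 p - c3 q) <= dist3 p q.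
Proof. unfold dist3. eapply Rle_trans; [|apply Rmax_r]. apply Rmax_r. Qed.

Lemma not_cocompact_line G al be : (al <> 0 \/ be <> 0) ->
  (forall g, G g -> al * c1 g + be * c2 g = 0) -> ~ cocompact G.
Proof.
  intros Hnz Hl Hc.
  set (L := fun p : R3 => al * c1 p + be * c2 p).
  destruct (Hc nat (fun n p => Rabs (L p) < INR n)) as [l Hlst].
  - intro n; split.
    + intros p Hp. set (K := Rabs al + Rabs be).
      assert (HK : 0 <= K) by (unfold K; pose proof (Rabs_pos al); pose proof (Rabs_pos be); lra).
      exists ((INR n - Rabs (L p)) / (K + 1)). split.
      * apply Rdiv_lt_0_compat; lra.
      * intros q Hq. pose proof (dist3_1 p q). pose proof (dist3_2 p q).
        assert (E : L q = L p - (al * (c1 p - c1 q) + be * (c2 p - c2 q))) by (unfold L; ring).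
        rewrite E.
        assert (B1 : Rabs (al * (c1 p - c1 q) + be * (c2 p - c2 q)) <= K * dist3 p q).
        { eapply Rle_trans; [apply Rabs_triang|]. rewrite !Rabs_mult. unfold K.
          rewrite Rmult_plus_distr_r.
          apply Rplus_le_compat; apply Rmult_le_compat_l; auto using Rabs_pos. }
        assert (B2 : K * dist3 p q < INR n - Rabs (L p)).
        { assert (0 <= dist3 p q) by (eapply Rle_trans; [apply Rabs_pos| eauto]).
          assert (dist3 p q * (K + 1) < INR n - Rabs (L p)).
          { apply (Rmult_lt_compat_r (K+1)) in Hq; [|lra].
            unfold Rdiv in Hq. rewrite Rmult_assoc, Rinv_l in Hq; lra. }
          nra. }
        eapply Rle_lt_trans; [apply Rabs_triang|]. rewrite Rabs_Ropp. lra.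
    + intros g p Hg Hp. replace (L (Hmul g p)) with (L g + L p).
      unfold L at 1. rewrite Hl by auto. rewrite Rplus_0_l. exact Hp.
      unfold L, Hmul, c1, c2; simpl; ring.
  - intro p. destruct (archimed (Rabs (L p))) as [H1 _].
    exists (Z.to_nat (up (Rabs (L p)))).
    rewrite INR_IZR_INZ, Z2Nat.id. exact H1.
    apply le_IZR. pose proof (Rabs_pos (L p)). lra.
  - set (N := fold_right Nat.add 0%nat l).
    assert (Hd : 0 < al * al + be * be).
    { destruct Hnz as [H|H]; [pose proof (Rsqr_pos_lt al H)|pose proof (Rsqr_pos_lt be H)];
      unfold Rsqr in *; nra. }
    destruct (Hlst (al * INR N / (al*al+be*be), be * INR N / (al*al+be*be), 0)) as [i [Hi Hu]].
    replace (L _) with (INR N) in Hu by (unfold L, c1, c2; simpl; field; lra).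
    rewrite Rabs_right in Hu by (apply Rle_ge, pos_INR).
    pose proof (le_INR _ _ (in_sum l i Hi)). fold N in H. lra.
Qed.

Lemma exists_central G : cocompact_lattice G -> exists z, 0 < z /\ G (0,0,z).
Proof.
  intros [HG [Hd Hc]].
  apply NNPP; intro Hn.
  assert (Hcomm : forall g h, G g -> G h -> c1 g * c2 h - c2 g * c1 h = 0).
  { intros g h Hg Hh. set (d := c1 g * c2 h - c2 g * c1 h).
    assert (Gk : G (0,0,d)).
    { unfold d; rewrite <- (comm_elt g h). destruct HG as [H1 [Hm Hi]]. apply Hm; auto. }
    destruct (Rtotal_order d 0) as [Hl|[He|Hgt]]; auto.
    - exfalso. apply Hn. exists (-d). split; [lra|].
      replace (0,0,-d) with (Hinv (0,0,d)). apply HG; auto.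
      apply R3_eq; unfold Hinv, c1, c2, c3; simpl; ring.
    - exfalso. apply Hn. exists d. auto. }
  destruct (classic (exists g, G g /\ (c1 g <> 0 \/ c2 g <> 0))) as [[g0 [Hg0 Hnz]]|Hno].
  - apply (not_cocompact_line G (c2 g0) (- c1 g0)); auto.
    + destruct Hnz; [right|left]; auto. intro; apply H; lra.
    + intros h Hh. pose proof (Hcomm g0 h Hg0 Hh). lra.
  - apply (not_cocompact_line G 1 0); auto.
    intros g Hg. assert (c1 g = 0).
    { apply NNPP; intro H. apply Hno. exists g; auto. }
    rewrite H; ring.
Qed.

Lemma rat_between x y : x < y -> exists (n : Z) (M : nat), (0 < M)%nat /\ x < IZR n / INR M < y.
Proof.
  intro H. destruct (archimed (/ (y - x))) as [Hu _].
  assert (Hpos : 0 < / (y - x)) by (apply Rinv_0_lt_compat; lra).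
  set (m := up (/ (y - x))) in *.
  assert (Hm : (0 < m)%Z) by (apply lt_IZR; lra).
  destruct (archimed (IZR m * x)) as [H1 H2].
  exists (up (IZR m * x)), (Z.to_nat m). split; [lia|].
  rewrite INR_IZR_INZ, Z2Nat.id by lia.
  assert (Hm' : 0 < IZR m) by (apply IZR_lt; lia).
  assert (IZR m * (y - x) > 1).
  { apply (Rmult_lt_compat_r (y - x)) in Hu; [|lra]. rewrite Rinv_l in Hu; lra. }
  split.
  - apply (Rmult_lt_reg_l (IZR m)); auto. field_simplify; lra.
  - apply (Rmult_lt_reg_l (IZR m)); auto. field_simplify; lra.
Qed.

Lemma interval_exists E B c0 d : -E <= c0 <= E -> -E < B < E -> 0 < d ->
  exists c1 c2, c1 < c2 /\ -E <= c1 /\ c2 <= E /\ Rabs (c1 - c0) < d /\ Rabs (c2 - c0) < d /\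
    (B < c1 \/ c2 < B).
Proof.
  intros H0 HB Hd.
  destruct (Rtotal_order c0 B) as [Hl|[He|Hg]].
  - set (t := Rmin d (B - c0) / 2).
    assert (0 < Rmin d (B - c0)) by (apply Rmin_pos; lra).
    assert (0 < t) by (unfold t; lra).
    assert (t < d /\ t < B - c0).
    { unfold t. pose proof (Rmin_l d (B - c0)). pose proof (Rmin_r d (B - c0)). lra. }
    exists c0, (c0 + t). repeat split; try lra.
    + rewrite Rminus_diag_eq, Rabs_R0; lra.
    + replace (c0 + t - c0) with t by ring. rewrite Rabs_right; lra.
  - set (t := Rmin d (E - B) / 2).
    assert (0 < Rmin d (E - B)) by (apply Rmin_pos; lra).
    assert (0 < t) by (unfold t; lra).
    assert (t < d /\ t < E - B).
    { unfold t. pose proof (Rmin_l d (E - B)). pose proof (Rmin_r d (E - B)).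
      assert (0 < Rmin d (E - B)) by (apply Rmin_pos; lra). lra. }
    exists (B + t / 2), (B + t). repeat split; try lra.
    + rewrite He. replace (B + t / 2 - B) with (t/2) by ring. rewrite Rabs_right; lra.
    + rewrite He. replace (B + t - B) with t by ring. rewrite Rabs_right; lra.
  - set (t := Rmin d (c0 - B) / 2).
    assert (0 < Rmin d (c0 - B)) by (apply Rmin_pos; lra).
    assert (0 < t) by (unfold t; lra).
    assert (t < d /\ t < c0 - B).
    { unfold t. pose proof (Rmin_l d (c0 - B)). pose proof (Rmin_r d (c0 - B)).
      assert (0 < Rmin d (c0 - B)) by (apply Rmin_pos; lra). lra. }
    exists (c0 - t), c0. repeat split; try lra.
    + replace (c0 - t - c0) with (- t) by ring. rewrite Rabs_Ropp, Rabs_right; lra.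
    + rewrite Rminus_diag_eq, Rabs_R0; lra.
Qed.

Lemma sign_aux K D h1 h2 q : 0 < K -> 0 < D -> 0 < h1 -> 0 < h2 ->
  K + K * D / h1 < q < K + K * D / h2 ->
  K < q /\ K * D / (q - K) < h1 /\ h2 < K * D / (q - K).
Proof.
  intros HK HD H1 H2 [Hq1 Hq2].
  assert (0 < K * D / h1) by (apply Rdiv_lt_0_compat; nra).
  assert (Kq : K < q) by lra.
  assert (E1 : K * D < h1 * (q - K)).
  { assert (K * D / h1 * h1 = K * D) by (field; lra). nra. }
  assert (E2 : h2 * (q - K) < K * D).
  { assert (K * D / h2 * h2 = K * D) by (field; lra). nra. }
  assert (Et : K * D / (q - K) * (q - K) = K * D) by (field; lra).
  split; [lra|split]; nra.
Qed.

Lemma hit K D B c1 c2 : 0 < K -> 0 < D -> c1 < c2 -> (B < c1 \/ c2 < B) ->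
  exists c (n : Z) (M : nat), c1 <= c <= c2 /\ c <> B /\ (0 < M)%nat /\
    K * (1 + D / ((c - B) * (c - B))) = IZR n / INR M.
Proof.
  intros HK HD H12 Hside.
  set (h1 := (c1 - B) * (c1 - B)). set (h2 := (c2 - B) * (c2 - B)).
  assert (P1 : 0 < h1) by (unfold h1; destruct Hside; nra).
  assert (P2 : 0 < h2) by (unfold h2; destruct Hside; nra).
  assert (Hq : exists q n M, (0 < M)%nat /\ q = IZR n / INR M /\ K < q /\
     (h1 - K * D / (q - K)) * (h2 - K * D / (q - K)) <= 0).
  { destruct Hside as [Hs|Hs].
    - assert (h1 < h2) by (unfold h1, h2; nra).
      assert (K * D / h2 < K * D / h1).
      { unfold Rdiv. apply Rmult_lt_compat_l; [nra|]. apply Rinv_lt_contravar; nra. }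
      destruct (rat_between (K + K * D / h2) (K + K * D / h1)) as [n [M [HM Hb]]]; [lra|].
      destruct (sign_aux K D h2 h1 (IZR n / INR M)) as [A1 [A2 A3]]; auto.
      exists (IZR n / INR M), n, M. repeat split; auto. nra.
    - assert (h2 < h1) by (unfold h1, h2; nra).
      assert (K * D / h1 < K * D / h2).
      { unfold Rdiv. apply Rmult_lt_compat_l; [nra|]. apply Rinv_lt_contravar; nra. }
      destruct (rat_between (K + K * D / h1) (K + K * D / h2)) as [n [M [HM Hb]]]; [lra|].
      destruct (sign_aux K D h1 h2 (IZR n / INR M)) as [A1 [A2 A3]]; auto.
      exists (IZR n / INR M), n, M. repeat split; auto. nra. }
  destruct Hq as [q [n [M [HM [Hqe [HKq Hs]]]]]].
  set (t := K * D / (q - K)) in *.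
  assert (Ht : 0 < t) by (unfold t; apply Rdiv_lt_0_compat; nra).
  destruct (IVT_cor (fun c => (c - B) * (c - B) - t) c1 c2) as [c [Hc Hct]].
  - reg.
  - lra.
  - exact Hs.
  - exists c, n, M. repeat split; try lra.
    + auto.
    + rewrite <- Hqe. replace ((c - B) * (c - B)) with t by lra. unfold t. field. split; lra.
Qed.

Lemma dir a b : exists u1 u2, u1 * u1 + u2 * u2 = 1 /\
  a = sqrt (a * a + b * b) * u1 /\ b = sqrt (a * a + b * b) * u2.
Proof.
  assert (Hn : 0 <= a * a + b * b) by nra.
  destruct (Req_dec (sqrt (a * a + b * b)) 0) as [H|H].
  - apply sqrt_eq_0 in H; auto. exists 1, 0.
    assert (a = 0) by nra. assert (b = 0) by nra. subst. replace (0 * 0 + 0 * 0) with 0 by ring. rewrite sqrt_0. repeat split; ring.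
  - assert (Hs := sqrt_sqrt _ Hn).
    exists (a / sqrt (a * a + b * b)), (b / sqrt (a * a + b * b)).
    repeat split; try (field; auto).
    replace (a / sqrt (a * a + b * b) * (a / sqrt (a * a + b * b)) +
      b / sqrt (a * a + b * b) * (b / sqrt (a * a + b * b))) with
      ((a * a + b * b) / (sqrt (a * a + b * b) * sqrt (a * a + b * b))) by (field; auto).
    rewrite Hs. field. intro H0. rewrite H0, sqrt_0 in H. auto.
Qed.

Lemma dist3_refl p : dist3 p p = 0.
Proof. unfold dist3. rewrite !Rminus_eq_0, Rabs_R0. unfold Rmax. destruct Rle_dec; destruct Rle_dec; lra. Qed.

Theorem theorem4p17 (A B : R) (G : R3 -> Prop) :
  0 < A -> cocompact_lattice G ->
  forall E : R, Rabs B < E ->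
  forall (p w : R3), vnorm A w = E ->
  forall eps : R, 0 < eps ->
  exists p' w' : R3,
    vnorm A w' = E /\ dist3 p p' < eps /\ dist3 w w' < eps /\ in_Per A B G p' w'.
Proof.
  intros HA HG E HE p w Hw eps Heps.
  destruct (exists_central G HG) as [z [Hz HGz]].
  destruct HG as [Hsub _].
  assert (E0 : 0 < E) by (pose proof (Rabs_pos B); lra).
  assert (HBE : -E < B < E) by (apply Rabs_def2 in HE; lra).
  destruct w as [[a b] c0].
  unfold vnorm, gmet, c1, c2, c3 in Hw; simpl in Hw.
  assert (Hen : A * (a * a + b * b) + c0 * c0 = E * E).
  { rewrite <- Hw. rewrite sqrt_sqrt; nra. }
  assert (Hc0 : -E <= c0 <= E) by nra.
  destruct (dir a b) as [u1 [u2 [Hu [Ha Hb]]]].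
  assert (Hu1 : Rabs u1 <= 1) by (apply Rabs_le; nra).
  assert (Hu2 : Rabs u2 <= 1) by (apply Rabs_le; nra).
  set (rho := fun c => sqrt ((E * E - c * c) / A)).
  assert (Hrho0 : sqrt (a * a + b * b) = rho c0).
  { unfold rho. f_equal. field_simplify_eq; [lra|lra]. }
  assert (Hcont : continuity_pt rho c0).
  { unfold rho. apply (continuity_pt_comp (fun c => (E * E - c * c) / A) sqrt).
    - reg.
    - apply continuity_pt_sqrt. apply Rdiv_le_0_compat; nra. }
  destruct (Hcont eps Heps) as [del [Hdel Hdel']].
  simpl in Hdel'. unfold R_dist in Hdel'.
  assert (Hrc : forall c, Rabs (c - c0) < del -> Rabs (rho c - rho c0) < eps).
  { intros c Hc. destruct (Req_dec c c0) as [->|Hne].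
    - rewrite Rminus_eq_0, Rabs_R0; lra.
    - apply Hdel'. split; [split; [exact I| auto] | auto]. }
  set (d := Rmin del eps).
  assert (Hd : 0 < d) by (apply Rmin_pos; lra).
  destruct (interval_exists E B c0 d Hc0 HBE Hd) as [k1 [k2 [H12 [Hk1 [Hk2 [Hd1 [Hd2 Hside]]]]]]].
  assert (HK : 0 < PI * A / z) by (apply Rdiv_lt_0_compat; [apply Rmult_lt_0_compat; [apply PI_RGT_0|]|]; lra).
  assert (HD : 0 < E * E - B * B) by nra.
  destruct (hit (PI * A / z) (E * E - B * B) B k1 k2 HK HD H12 Hside)
    as [c [n [M [Hc [HcB [HM Hphi]]]]]].
  assert (Hcd : Rabs (c - c0) < d).
  { apply Rabs_def2 in Hd1. apply Rabs_def2 in Hd2. apply Rabs_def1; lra. }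
  assert (Hdl : d <= del) by apply Rmin_l.
  assert (Hde : d <= eps) by apply Rmin_r.
  assert (HcE : -E <= c <= E) by lra.
  assert (Hr2 : rho c * rho c = (E * E - c * c) / A).
  { unfold rho. apply sqrt_sqrt. apply Rdiv_le_0_compat; nra. }
  exists p, (rho c * u1, rho c * u2, c).
  split; [|split; [|split]].
  -
    unfold vnorm, gmet, c1, c2, c3; simpl.
    replace (A * (rho c * u1 * (rho c * u1) + rho c * u2 * (rho c * u2)) + c * c) with (E * E).
    apply sqrt_square; lra.
    transitivity (A * (rho c * rho c) * (u1 * u1 + u2 * u2) + c * c); [|ring].
    rewrite Hu, Hr2. field. lra.
  - rewrite dist3_refl. exact Heps.
  - unfold dist3, c1, c2, c3; simpl.
    assert (Hrr : Rabs (rho c - rho c0) < eps) by (apply Hrc; lra).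
    assert (Hx : forall u, Rabs u <= 1 -> Rabs (rho c0 * u - rho c * u) < eps).
    { intros u Hu'. replace (rho c0 * u - rho c * u) with (- ((rho c - rho c0) * u)) by ring.
      rewrite Rabs_Ropp, Rabs_mult.
      pose proof (Rabs_pos (rho c - rho c0)). pose proof (Rabs_pos u). nra. }
    rewrite Hrho0 in Ha, Hb. rewrite Ha, Hb.
    apply Rmax_lub_lt; [apply Hx; auto|]. apply Rmax_lub_lt; [apply Hx; auto|].
    rewrite Rabs_minus_sym. lra.
  - destruct p as [[x0 y0] z0].
    set (a0 := rho c * u1). set (b0 := rho c * u2).
    split.
    + exists (Ssol A B x0 y0 z0 a0 b0 c). split; [apply S_geod; auto|]. apply S_init; auto.
    + intros s Hs Hs0 Hsv.
      pose proof (S_unique A B x0 y0 z0 a0 b0 c HA HcB s Hs Hs0 Hsv) as Heqs.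
      pose proof (om_nz A B c HA HcB) as Hom.
      assert (HMp : 0 < INR M) by (apply lt_0_INR; lia).
      assert (Hr2' : a0 ^ 2 + b0 ^ 2 = (E * E - c * c) / A).
      { unfold a0, b0. transitivity (rho c * rho c * (u1 * u1 + u2 * u2)); [ring|].
        rewrite Hu, Hr2; ring. }
      assert (Hn : IZR n = INR M * (PI * A / z * (1 + (E * E - B * B) / ((c - B) * (c - B))))).
      { rewrite Hphi. field. lra. }
      assert (Hcb : c - B <> 0) by lra.
      assert (HPI := PI_RGT_0).
      destruct (Rlt_or_le 0 (om A B c)) as [Hpos|Hneg].
      * exists (2 * INR M * PI / om A B c). split.
        { apply Rdiv_lt_0_compat; [|lra]. nra. }
        intro t. exists (0, 0, IZR n * z). split; [apply central_Z; auto|].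
        rewrite !Heqs. rewrite (S_shift A B x0 y0 z0 a0 b0 c HA HcB _ M).
        2: { left. field. auto. }
        f_equal. f_equal. rewrite Hr2', Hn. unfold om. field. repeat split; lra.
      * assert (Hneg' : om A B c < 0) by lra.
        exists (- (2 * INR M * PI) / om A B c). split.
        { replace (- (2 * INR M * PI) / om A B c) with (2 * INR M * PI / - om A B c) by (field; auto).
          apply Rdiv_lt_0_compat; nra. }
        intro t. exists (0, 0, IZR (- n) * z). split; [apply central_Z; auto|].
        rewrite !Heqs. rewrite (S_shift A B x0 y0 z0 a0 b0 c HA HcB _ M).
        2: { right. field. auto. }
        f_equal. f_equal. rewrite opp_IZR, Hr2', Hn. unfold om. field. repeat split; lra.
Qed.
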